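(* Let $X$ be a type and $\sim:X\to X\to\mathbb P$ a decidable equivalence relation. Suppose we are given a list $l_r$ over $X$ such that every $x:X$ has some $y\in l_r$ with $x\sim y$. Then one can compute $n:\mathbb N$ and functions $c:X\to\mathrm{Fin}\,n$ and $r:\mathrm{Fin}\,n\to X$ such that: <ul> <li>$c(r\,p)=p$ for all $p:\mathrm{Fin}\,n$;</li> <li>$x\sim y\leftrightarrow c\,x=c\,y$ for all $x,y:X$.</li> </ul>
   Context: This is stated in constructive type theory, where ''one can compute'' means the data is constructed in $\mathsf{Type}$ rather than merely proved to exist. The list $l_r$ is given as data. $\mathrm{Fin}\,n$ is the finite type $\{0,\dots,n-1\}$. A relation is decidable if a Boolean-valued function characterises it. *)

(* Defs.v *)
From mathcomp Require Import all_boot.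
From Stdlib Require Import List.
Set Implicit Arguments. Unset Strict Implicit. Unset Printing Implicit Defensive.

(* Main.v *)
Require Import Defs.
From mathcomp Require Import all_boot.
From Stdlib Require Import List.

Section S.
Variables (X : Type) (d : X -> X -> bool).
Hypothesis drefl : forall x, d x x.
Hypothesis dsym : forall x y, d x y -> d y x.
Hypothesis dtrans : forall x y z, d x y -> d y z -> d x z.

Fixpoint reps (l : list X) : seq.seq X :=
  match l with
  | nil => [::]
  | a :: l => let r := reps l in if has (d a) r then r else a :: r
  end.

Lemma reps_pw l : pairwise (fun a b => ~~ d a b) (reps l).
Proof.
elim: l => [|a l IH] //=.
case: ifP => // H /=; rewrite IH andbT.
by rewrite all_predC H.
Qed.

Lemma reps_cov l y : List.In y l -> has (d y) (reps l).
Proof.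
elim: l => [|a l IH] //= [->|Hy].
  by case: ifP => // _ /=; rewrite drefl.
case: ifP => _; first exact: IH.
by rewrite /= IH ?orbT.
Qed.

Lemma find_nth (s : seq.seq X) (x0 : X) (p : nat) : pairwise (fun a b => ~~ d a b) s -> p < size s ->
  seq.find (d (seq.nth x0 s p)) s = p.
Proof.
elim: s p => [|a s IH] [|p] //=; first by rewrite drefl.
move=> /andP [Ha Hs] Hp.
have Hn : ~~ d (seq.nth x0 s p) a.
  apply/negP => /dsym H.
  by move/(all_nthP x0): Ha => /(_ p Hp) /=; rewrite H.
by rewrite (negbTE Hn) IH.
Qed.
End S.

Theorem theorem9 (X : Type) (R : X -> X -> Prop)
  (R_refl : forall x, R x x)
  (R_sym : forall x y, R x y -> R y x)
  (R_trans : forall x y z, R x y -> R y z -> R x z)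
  (dec : X -> X -> bool) (dec_spec : forall x y, R x y <-> dec x y = true)
  (lr : list X) (lr_cover : forall x, exists y, List.In y lr /\ R x y) :
  {n : nat & {c : X -> 'I_n & {r : 'I_n -> X |
     (forall p : 'I_n, c (r p) = p) /\
     (forall x y : X, R x y <-> c x = c y)}}}.
Proof.
have drefl : forall x, dec x x by move=> x; apply/dec_spec.
have dsym : forall x y, dec x y -> dec y x.
  by move=> x y /dec_spec H; apply/dec_spec; auto.
have dtrans : forall x y z, dec x y -> dec y z -> dec x z.
  by move=> x y z /dec_spec H1 /dec_spec H2; apply/dec_spec; eauto.
set s := @reps X dec lr.
have Hhas : forall x, has (dec x) s.
  move=> x; have [y [Hy Hxy]] := lr_cover x.
  apply: sub_has (@reps_cov X dec drefl lr _ Hy) => z; apply: dtrans; exact/dec_spec.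
have Hlt : forall x, seq.find (dec x) s < size s by move=> x; rewrite -has_find.
exists (size s), (fun x => Ordinal (Hlt x)), (fun p => tnth (in_tuple s) p).
split.
  move=> p; apply/val_inj => /=; rewrite (tnth_nth (tnth_default (in_tuple s) p)).
  by apply: find_nth => //; apply: reps_pw.
move=> x y; split.
  move=> /dec_spec Hxy; apply/val_inj => /=; apply: eq_find => z.
  apply/idP/idP => H; first by apply: dtrans H; apply: dsym.
  exact: dtrans Hxy H.
move=> /(congr1 val) /= E.
have Hx := seq.nth_find x (Hhas x).
have Hy := seq.nth_find x (Hhas y).
rewrite E in Hx.
by apply/dec_spec; apply: dtrans Hx _; apply: dsym.
Qed.
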